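(* Let $\mathscr{B}$ be a $\mathscr{V}$-finitely-well-complete cotensored $\mathscr{V}$-category. (1) If $\mathscr{B}$ has $\mathscr{V}$-cokernel-pairs, then $(\mathsf{Epi}_\mathscr{V}\mathscr{B},\mathsf{StrMono}_\mathscr{V}\mathscr{B})$ is a $\mathscr{V}$-factorization-system on $\mathscr{B}$. (2) For any class $\Sigma$ of morphisms in $\mathscr{B}$, letting $\mathscr{N}:=\Sigma^{\downarrow_\mathscr{V}}\cap\mathsf{StrMono}_\mathscr{V}\mathscr{B}$, the pair $(\mathscr{N}^{\uparrow_\mathscr{V}},\mathscr{N})$ is a $\mathscr{V}$-factorization-system on $\mathscr{B}$.
   Context: $\mathscr{V}$ is a closed symmetric monoidal category (no limits assumed). In a $\mathscr{V}$-category $\mathscr{B}$: $\mathscr{V}$-limits are cones sent by all $\mathscr{B}(A,-):\mathscr{B}\to\mathscr{V}$ to limit cones; $\mathscr{V}$-colimits (e.g. $\mathscr{V}$-cokernel-pairs) are $\mathscr{V}$-limits in $\mathscr{B}^{op}$. $m$ is a $\mathscr{V}$-mono if $\mathscr{B}(A,m)$ is mono in $\mathscr{V}$ for all $A$; $e$ is a $\mathscr{V}$-epi if $\mathscr{B}(e,C)$ is mono for all $C$; $\mathsf{Epi}_\mathscr{V}\mathscr{B}$ denotes the $\mathscr{V}$-epis. For $e:A_1\to A_2$, $m:B_1\to B_2$, $e\downarrow_\mathscr{V} m$ means the square formed by $\mathscr{B}(A_2,m)$, $\mathscr{B}(A_1,m)$, $\mathscr{B}(e,B_1)$, $\mathscr{B}(e,B_2)$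 is a pullback in $\mathscr{V}$; $\Sigma^{\downarrow_\mathscr{V}}$, $\mathscr{N}^{\uparrow_\mathscr{V}}$ are the classes of morphisms $\mathscr{V}$-orthogonal from all of $\Sigma$, resp. to all of $\mathscr{N}$. $\mathsf{StrMono}_\mathscr{V}\mathscr{B}$ is the class of $\mathscr{V}$-monos $m$ with $e\downarrow_\mathscr{V} m$ for all $\mathscr{V}$-epis $e$. $\mathscr{B}$ is $\mathscr{V}$-finitely-well-complete if it has all finite $\mathscr{V}$-limits and $\mathscr{V}$-fibre-products (wide $\mathscr{V}$-pullbacks) of arbitrary class-indexed families of $\mathscr{V}$-strong-monos with common codomain. A $\mathscr{V}$-factorization-system is a pair $(\mathscr{E},\mathscr{M})$ with $\mathscr{E}^{\downarrow_\mathscr{V}}=\mathscr{M}$, $\mathscr{M}^{\uparrow_\mathscr{V}}=\mathscr{E}$ and every morphism assigned a factorization $m\cdot e$, $e\in\mathscr{E}$, $m\in\mathscr{M}$. *)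

(* Defs.v *)
From Stdlib Require Import List.

Record Category : Type := {
  ob :> Type;
  hom : ob -> ob -> Type;
  idm : forall a, hom a a;
  comp : forall a b c, hom b c -> hom a b -> hom a c;
  comp_idl : forall a b (f : hom a b), comp a b b (idm b) f = f;
  comp_idr : forall a b (f : hom a b), comp a a b f (idm a) = f;
  comp_assoc : forall a b c d (h : hom c d) (g : hom b c) (f : hom a b),
      comp a c d h (comp a b c g f) = comp a b d (comp b c d h g) f }.
Arguments hom {c0} _ _.
Arguments idm {c0} _.
Arguments comp {c0 a b c} _ _.
Notation "g ∘ f" := (comp g f) (at level 40, left associativity).

Record MonData (C : Category) := {
  tens : C -> C -> C;
  tensm : forall a b c d, hom a b -> hom c d -> hom (tens a c) (tens b d);
  unitob : C;
  assoc : forall a b c, hom (tens (tens a b) c) (tens a (tens b c));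
  assoc_inv : forall a b c, hom (tens a (tens b c)) (tens (tens a b) c);
  lunit : forall a, hom (tens unitob a) a;
  lunit_inv : forall a, hom a (tens unitob a);
  runit : forall a, hom (tens a unitob) a;
  runit_inv : forall a, hom a (tens a unitob);
  braid : forall a b, hom (tens a b) (tens b a);
  ihom : C -> C -> C;
  ev : forall b c, hom (tens (ihom b c) b) c;
  curry : forall a b c, hom (tens a b) c -> hom a (ihom b c) }.
Arguments tens {C} _ _ _.
Arguments tensm {C} _ _ _ _ _ _ _.
Arguments unitob {C} _.
Arguments assoc {C} _ _ _ _.
Arguments assoc_inv {C} _ _ _ _.
Arguments lunit {C} _ _.
Arguments lunit_inv {C} _ _.
Arguments runit {C} _ _.
Arguments runit_inv {C} _ _.
Arguments braid {C} _ _ _.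
Arguments ihom {C} _ _ _.
Arguments ev {C} _ _ _.
Arguments curry {C} _ _ _ _ _.

Section MonLawsSec.
Variable C : Category.
Variable D : MonData C.
Local Notation "a ⊗ b" := (tens D a b) (at level 30, right associativity).
Local Notation "f ⊗m g" := (tensm D _ _ _ _ f g) (at level 30).
Local Notation I := (unitob D).
Record MonLaws : Prop := {
  tens_id : forall a b : C, idm a ⊗m idm b = idm (a ⊗ b);
  tens_comp : forall (a b c a' b' c' : C) (f : hom a b) (g : hom b c)
      (f' : hom a' b') (g' : hom b' c'),
      (g ∘ f) ⊗m (g' ∘ f') = (g ⊗m g') ∘ (f ⊗m f');
  assoc_iso1 : forall a b c, assoc D a b c ∘ assoc_inv D a b c = idm _;
  assoc_iso2 : forall a b c, assoc_inv D a b c ∘ assoc D a b c = idm _;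
  assoc_nat : forall (a a' b b' c c' : C) (f : hom a a') (g : hom b b') (h : hom c c'),
      assoc D a' b' c' ∘ ((f ⊗m g) ⊗m h) = (f ⊗m (g ⊗m h)) ∘ assoc D a b c;
  lunit_iso1 : forall a, lunit D a ∘ lunit_inv D a = idm _;
  lunit_iso2 : forall a, lunit_inv D a ∘ lunit D a = idm _;
  lunit_nat : forall (a b : C) (f : hom a b), lunit D b ∘ (idm I ⊗m f) = f ∘ lunit D a;
  runit_iso1 : forall a, runit D a ∘ runit_inv D a = idm _;
  runit_iso2 : forall a, runit_inv D a ∘ runit D a = idm _;
  runit_nat : forall (a b : C) (f : hom a b), runit D b ∘ (f ⊗m idm I) = f ∘ runit D a;
  braid_nat : forall (a a' b b' : C) (f : hom a a') (g : hom b b'),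
      braid D a' b' ∘ (f ⊗m g) = (g ⊗m f) ∘ braid D a b;
  braid_sym : forall a b, braid D b a ∘ braid D a b = idm _;
  pentagon : forall a b c d,
      assoc D a b (c ⊗ d) ∘ assoc D (a ⊗ b) c d
      = (idm a ⊗m assoc D b c d) ∘ assoc D a (b ⊗ c) d ∘ (assoc D a b c ⊗m idm d);
  triangle : forall a b, (idm a ⊗m lunit D b) ∘ assoc D a I b = runit D a ⊗m idm b;
  hexagon : forall a b c,
      assoc D b c a ∘ braid D a (b ⊗ c) ∘ assoc D a b c
      = (idm b ⊗m braid D a c) ∘ assoc D b a c ∘ (braid D a b ⊗m idm c);
  curry_ev : forall a b c (g : hom (a ⊗ b) c),
      ev D b c ∘ (curry D a b c g ⊗m idm b) = g;
  curry_uniq : forall a b c (g : hom (a ⊗ b) c) (h : hom a (ihom D b c)),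
      ev D b c ∘ (h ⊗m idm b) = g -> h = curry D a b c g }.
End MonLawsSec.

Record SMCC : Type := {
  scat :> Category;
  sdata : MonData scat;
  slaws : MonLaws scat sdata }.

Definition tn {V : SMCC} (a b : V) : V := tens (sdata V) a b.
Definition tm {V : SMCC} {a b c d : V} (f : hom a b) (g : hom c d)
  : hom (tn a c) (tn b d) := tensm (sdata V) a b c d f g.
Definition I_ (V : SMCC) : V := unitob (sdata V).
Definition lu {V : SMCC} (a : V) : hom (tn (I_ V) a) a := lunit (sdata V) a.
Definition lui {V : SMCC} (a : V) : hom a (tn (I_ V) a) := lunit_inv (sdata V) a.
Definition ru {V : SMCC} (a : V) : hom (tn a (I_ V)) a := runit (sdata V) a.
Definition rui {V : SMCC} (a : V) : hom a (tn a (I_ V)) := runit_inv (sdata V) a.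
Definition asc {V : SMCC} (a b c : V) : hom (tn (tn a b) c) (tn a (tn b c)) :=
  assoc (sdata V) a b c.
Definition br {V : SMCC} (a b : V) : hom (tn a b) (tn b a) := braid (sdata V) a b.
Definition ih {V : SMCC} (a b : V) : V := ihom (sdata V) a b.
Definition curryV {V : SMCC} {a b c : V} (g : hom (tn a b) c) : hom a (ih b c) :=
  curry (sdata V) a b c g.

Record VCatData (V : SMCC) : Type := {
  vob : Type;
  vhom : vob -> vob -> V;
  vM : forall a b c, hom (tn (vhom b c) (vhom a b)) (vhom a c);
  vj : forall a, hom (I_ V) (vhom a a) }.

Section VCatLawsSec.
Variable V : SMCC.
Variable B : VCatData V.
Record VCatLaws : Prop := {
  vassoc : forall a b c d,
      vM V B a c d ∘ tm (idm _) (vM V B a b c) ∘ asc _ _ _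
      = vM V B a b d ∘ tm (vM V B b c d) (idm _);
  vunitl : forall a b, vM V B a b b ∘ tm (vj V B b) (idm _) = lu (vhom V B a b);
  vunitr : forall a b, vM V B a a b ∘ tm (idm _) (vj V B a) = ru (vhom V B a b) }.
End VCatLawsSec.

Record VCat (V : SMCC) : Type := {
  vdata :> VCatData V;
  vlaws : VCatLaws V vdata }.

Definition monoV {V : SMCC} {x y : V} (f : hom x y) : Prop :=
  forall (z : V) (g h : hom z x), f ∘ g = f ∘ h -> g = h.
Definition isoV {V : SMCC} {x y : V} (f : hom x y) : Prop :=
  exists g : hom y x, g ∘ f = idm x /\ f ∘ g = idm y.
Definition is_pullbackV {V : SMCC} {p x y z : V}
    (p1 : hom p x) (p2 : hom p y) (f : hom x z) (g : hom y z) : Prop :=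
  f ∘ p1 = g ∘ p2 /\
  forall (q : V) (q1 : hom q x) (q2 : hom q y), f ∘ q1 = g ∘ q2 ->
    exists! u : hom q p, p1 ∘ u = q1 /\ p2 ∘ u = q2.

Section VNotions.
Context {V : SMCC} (B : VCat V).
Local Notation Ob := (vob V B).
Local Notation H := (vhom V B).

(** morphisms of (the underlying category of) B *)
Definition mor (a b : Ob) : Type := hom (I_ V) (H a b).
Definition compB {a b c : Ob} (g : mor b c) (f : mor a b) : mor a c :=
  vM V B a b c ∘ tm g f ∘ lui (I_ V).
Definition idB (a : Ob) : mor a a := vj V B a.
Definition repR (a : Ob) {b c : Ob} (g : mor b c) : hom (H a b) (H a c) :=
  vM V B a b c ∘ tm g (idm _) ∘ lui (H a b).
Definition repL {a b : Ob} (f : mor a b) (c : Ob) : hom (H b c) (H a c) :=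
  vM V B a b c ∘ tm (idm _) f ∘ rui (H b c).

Definition MorClass : Type := forall a b : Ob, mor a b -> Prop.

Definition VMono {b1 b2 : Ob} (m : mor b1 b2) : Prop := forall a, monoV (repR a m).
Definition VEpi {a1 a2 : Ob} (e : mor a1 a2) : Prop := forall c, monoV (repL e c).

Definition orthV {a1 a2 b1 b2 : Ob} (e : mor a1 a2) (m : mor b1 b2) : Prop :=
  is_pullbackV (repR a2 m) (repL e b1) (repL e b2) (repR a1 m).

Definition downV (S : MorClass) : MorClass :=
  fun b1 b2 m => forall a1 a2 (e : mor a1 a2), S a1 a2 e -> orthV e m.
Definition upV (N : MorClass) : MorClass :=
  fun a1 a2 e => forall b1 b2 (m : mor b1 b2), N b1 b2 m -> orthV e m.
Definition capC (S T : MorClass) : MorClass := fun a b f => S a b f /\ T a b f.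

Definition EpiV : MorClass := fun a b e => VEpi e.
Definition StrMonoV : MorClass :=
  fun b1 b2 m => VMono m /\ forall a1 a2 (e : mor a1 a2), VEpi e -> orthV e m.

Definition is_fact_system (E M : MorClass) : Prop :=
  (forall b1 b2 (m : mor b1 b2), M b1 b2 m <-> downV E b1 b2 m) /\
  (forall a1 a2 (e : mor a1 a2), E a1 a2 e <-> upV M a1 a2 e) /\
  (forall a b (f : mor a b), exists c (e : mor a c) (m : mor c b),
      E a c e /\ M c b m /\ f = compB m e).

Definition finite_cat (J : Category) : Prop :=
  (exists l : list J, forall x, In x l) /\
  (forall i j : J, exists l : list (hom i j), forall f, In f l).

Definition is_Vlimit (J : Category) (D : J -> Ob) (Dm : forall i j, hom i j -> mor (D i) (D j))
    (L : Ob) (pi : forall j, mor L (D j)) : Prop :=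
  (forall i j (u : hom i j), compB (Dm i j u) (pi i) = pi j) /\
  forall (a : Ob) (X : V) (x : forall j, hom X (H a (D j))),
    (forall i j (u : hom i j), repR a (Dm i j u) ∘ x i = x j) ->
    exists! w : hom X (H a L), forall j, repR a (pi j) ∘ w = x j.

Definition has_finite_Vlimits : Prop :=
  forall (J : Category), finite_cat J ->
  forall (D : J -> Ob) (Dm : forall i j, hom i j -> mor (D i) (D j)),
    (forall i, Dm i i (idm i) = idB (D i)) ->
    (forall i j k (g : hom j k) (f : hom i j), Dm i k (g ∘ f) = compB (Dm j k g) (Dm i j f)) ->
    exists L pi, is_Vlimit J D Dm L pi.

Definition is_Vfibre_product (b : Ob) (I : Type) (A : I -> Ob) (m : forall i, mor (A i) b)
    (P : Ob) (q : mor P b) (p : forall i, mor P (A i)) : Prop :=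
  (forall i, compB (m i) (p i) = q) /\
  forall (a : Ob) (X : V) (y : hom X (H a b)) (x : forall i, hom X (H a (A i))),
    (forall i, repR a (m i) ∘ x i = y) ->
    exists! w : hom X (H a P), repR a q ∘ w = y /\ forall i, repR a (p i) ∘ w = x i.

Definition fin_well_complete : Prop :=
  has_finite_Vlimits /\
  forall (b : Ob) (I : Type) (A : I -> Ob) (m : forall i, mor (A i) b),
    (forall i, StrMonoV (A i) b (m i)) ->
    exists P q p, is_Vfibre_product b I A m P q p.

(** cotensors: [c] with [eps : X -> B(c,b)] such that the induced
    B(a,c) -> [X, B(a,b)] is invertible for all a *)
Definition is_cotensor (X : V) (b c : Ob) (eps : hom X (H c b)) : Prop :=
  forall a : Ob,
    isoV (curryV (vM V B a c b ∘ br (H a c) (H c b) ∘ tm (idm (H a c)) eps)).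

Definition cotensored : Prop :=
  forall (X : V) (b : Ob), exists c eps, is_cotensor X b c eps.

(** V-cokernel-pairs (V-pushout of f along f, i.e. V-limit in B^op) *)
Definition has_Vcokernel_pairs : Prop :=
  forall (a b : Ob) (f : mor a b), exists (q : Ob) (i1 i2 : mor b q),
    compB i1 f = compB i2 f /\
    forall c : Ob, is_pullbackV (repL i1 c) (repL i2 c) (repL f c) (repL f c).
End VNotions.

(* Main.v *)
Require Import Defs.
From Stdlib Require Import Setoid ClassicalEpsilon List.
Lemma mid {C : Category} {a b c : C} {X Y : hom a b} (H : X = Y) : forall (k : hom b c), k ∘ X = k ∘ Y.
Proof. intros; now rewrite H. Qed.
Ltac nrm := repeat rewrite comp_assoc.
Ltac rw H := let H1 := fresh "H1" in let H2 := fresh "H2" in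
  pose proof H as H1; repeat rewrite comp_assoc in H1;
  pose proof (fun c => @mid _ _ _ c _ _ H1) as H2; repeat setoid_rewrite comp_assoc in H2;
  nrm; (first [rewrite H1 | rewrite H2]); nrm; clear H1 H2.
Ltac rwr H := rw (eq_sym H).

Section Coh.
Context {V : SMCC}.
Local Notation L := (slaws V).
Local Notation I := (I_ V).

Definition asci (a b c : V) : hom (tn a (tn b c)) (tn (tn a b) c) := assoc_inv (sdata V) a b c.

Lemma cA {a b c d : V} (h : hom c d) (g : hom b c) (f : hom a b) : h ∘ (g ∘ f) = h ∘ g ∘ f.
Proof. apply comp_assoc. Qed.
Lemma cl {a b : V} (f : hom a b) : idm b ∘ f = f.
Proof. apply comp_idl. Qed.
Lemma cr {a b : V} (f : hom a b) : f ∘ idm a = f.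
Proof. apply comp_idr. Qed.

Lemma tm_id (a b : V) : tm (idm a) (idm b) = idm (tn a b).
Proof. apply (tens_id _ _ L). Qed.
Lemma tm_comp {a b c a' b' c' : V} (f : hom a b) (g : hom b c) (f' : hom a' b') (g' : hom b' c') :
  tm (g ∘ f) (g' ∘ f') = tm g g' ∘ tm f f'.
Proof. apply (tens_comp _ _ L). Qed.
Lemma tm_compl {a b c a' : V} (f : hom a b) (g : hom b c) :
  tm (g ∘ f) (idm a') = tm g (idm a') ∘ tm f (idm a').
Proof. rewrite <- tm_comp. now rewrite cl. Qed.
Lemma tm_compr {a b c a' : V} (f : hom a b) (g : hom b c) :
  tm (idm a') (g ∘ f) = tm (idm a') g ∘ tm (idm a') f.
Proof. rewrite <- tm_comp. now rewrite cl. Qed.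
Lemma tm_split {a b a' b' : V} (f : hom a b) (f' : hom a' b') :
  tm f f' = tm f (idm b') ∘ tm (idm a) f'.
Proof. rewrite <- tm_comp. now rewrite cl, cr. Qed.
Lemma tm_split' {a b a' b' : V} (f : hom a b) (f' : hom a' b') :
  tm f f' = tm (idm b) f' ∘ tm f (idm a').
Proof. rewrite <- tm_comp. now rewrite cl, cr. Qed.

Lemma lu_lui (a : V) : lu a ∘ lui a = idm a. Proof. apply (lunit_iso1 _ _ L). Qed.
Lemma lui_lu (a : V) : lui a ∘ lu a = idm _. Proof. apply (lunit_iso2 _ _ L). Qed.
Lemma ru_rui (a : V) : ru a ∘ rui a = idm a. Proof. apply (runit_iso1 _ _ L). Qed.
Lemma rui_ru (a : V) : rui a ∘ ru a = idm _. Proof. apply (runit_iso2 _ _ L). Qed.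
Lemma asc_asci (a b c : V) : asc a b c ∘ asci a b c = idm _. Proof. apply (assoc_iso1 _ _ L). Qed.
Lemma asci_asc (a b c : V) : asci a b c ∘ asc a b c = idm _. Proof. apply (assoc_iso2 _ _ L). Qed.
Lemma br_br (a b : V) : br b a ∘ br a b = idm _. Proof. apply (braid_sym _ _ L). Qed.
Lemma br_nat {a a' b b' : V} (f : hom a a') (g : hom b b') : br a' b' ∘ tm f g = tm g f ∘ br a b.
Proof. apply (braid_nat _ _ L). Qed.

Lemma lu_nat {a b : V} (f : hom a b) : lu b ∘ tm (idm I) f = f ∘ lu a.
Proof. apply (lunit_nat _ _ L). Qed.
Lemma ru_nat {a b : V} (f : hom a b) : ru b ∘ tm f (idm I) = f ∘ ru a.
Proof. apply (runit_nat _ _ L). Qed.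
Lemma asc_nat {a a' b b' c c' : V} (f : hom a a') (g : hom b b') (h : hom c c') :
  asc a' b' c' ∘ tm (tm f g) h = tm f (tm g h) ∘ asc a b c.
Proof. apply (assoc_nat _ _ L). Qed.
Lemma triangle' (a b : V) : tm (idm a) (lu b) ∘ asc a I b = tm (ru a) (idm b).
Proof. apply (triangle _ _ L). Qed.
Lemma pentagon' (a b c d : V) :
  asc a b (tn c d) ∘ asc (tn a b) c d
  = tm (idm a) (asc b c d) ∘ asc a (tn b c) d ∘ tm (asc a b c) (idm d).
Proof. apply (pentagon _ _ L). Qed.

Lemma lui_nat {a b : V} (f : hom a b) : lui b ∘ f = tm (idm I) f ∘ lui a.
Proof.
  rewrite <- (cl (tm _ f ∘ lui a)). rewrite <- (lui_lu b).
  rewrite <- !cA. rewrite (cA (lu b)), lu_nat. rewrite <- cA, lu_lui. now rewrite cr.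
Qed.
Lemma rui_nat {a b : V} (f : hom a b) : rui b ∘ f = tm f (idm I) ∘ rui a.
Proof.
  rewrite <- (cl (tm f _ ∘ rui a)). rewrite <- (rui_ru b).
  rewrite <- !cA. rewrite (cA (ru b)), ru_nat. rewrite <- cA, ru_rui. now rewrite cr.
Qed.

Lemma tmI_inj {a b : V} (f g : hom a b) : tm (idm I) f = tm (idm I) g -> f = g.
Proof.
  intro H. assert (E : forall h : hom a b, h = lu b ∘ tm (idm I) h ∘ lui a).
  { intro h. rewrite lu_nat. rewrite <- cA, lu_lui. now rewrite cr. }
  rewrite (E f), (E g), H. reflexivity.
Qed.
Lemma tmIr_inj {a b : V} (f g : hom a b) : tm f (idm I) = tm g (idm I) -> f = g.
Proof.
  intro H. assert (E : forall h : hom a b, h = ru b ∘ tm h (idm I) ∘ rui a).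
  { intro h. rewrite ru_nat. rewrite <- cA, ru_rui. now rewrite cr. }
  rewrite (E f), (E g), H. reflexivity.
Qed.

Lemma iso_cancel_r {a b c : V} (f g : hom b c) (i : hom a b) (j : hom b a) :
  i ∘ j = idm b -> f ∘ i = g ∘ i -> f = g.
Proof.
  intros Hij H. rewrite <- (cr f), <- (cr g), <- Hij, !cA, H. reflexivity.
Qed.


Lemma iso_cancel_l {a b c : V} (f g : hom c a) (i : hom a b) (j : hom b a) :
  j ∘ i = idm a -> i ∘ f = i ∘ g -> f = g.
Proof.
  intros Hij H. rewrite <- (cl f), <- (cl g), <- Hij, <- !cA, H. reflexivity.
Qed.

Lemma K1 (a b : V) : lu (tn a b) ∘ asc I a b = tm (lu a) (idm b).
Proof.
  apply tmI_inj.
  pose (R := asc I (tn I a) b ∘ tm (asc I I a) (idm b)).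
  pose (Ri := tm (asci I I a) (idm b) ∘ asci I (tn I a) b).
  assert (HR : R ∘ Ri = idm _).
  { unfold R, Ri. rwr (tm_compl (asci I I a) (asc I I a) (a':=b)).
    rewrite asc_asci, tm_id, cr. apply asc_asci. }
  apply (iso_cancel_r _ _ R Ri HR). unfold R.
  rewrite tm_compr.
  rwr (pentagon' I I a b). rw (triangle' I (tn a b)).
  rewrite <- (tm_id a b). rwr (asc_nat (ru I) (idm a) (idm b)).
  rwr (asc_nat (idm I) (lu a) (idm b)). rwr (tm_compl (asc I I a) (tm (idm I) (lu a)) (a':=b)).
  rewrite triangle'. reflexivity.
Qed.

Lemma K1' (a b : V) : asc I a b ∘ tm (lui a) (idm b) = lui (tn a b).
Proof.
  apply (iso_cancel_l _ _ (lu (tn a b)) (lui (tn a b)) (lui_lu _)).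
  rewrite lu_lui. rw (K1 a b). rewrite <- tm_compl, lu_lui, tm_id. reflexivity.
Qed.

Lemma K2 (a b : V) : ru (tn a b) = tm (idm a) (ru b) ∘ asc a b I.
Proof.
  apply tmIr_inj.
  rewrite <- triangle'.
  assert (P : asc (tn a b) I I = asci a b (tn I I) ∘ (tm (idm a) (asc b I I) ∘ asc a (tn b I) I ∘ tm (asc a b I) (idm I))).
  { rewrite <- pentagon'. rw (asci_asc a b (tn I I)). now rewrite cl. }
  assert (N : tm (idm (tn a b)) (lu I) ∘ asci a b (tn I I) = asci a b I ∘ tm (idm a) (tm (idm b) (lu I))).
  { rewrite <- (tm_id a b).
    transitivity (asci a b I ∘ asc a b I ∘ tm (tm (idm a) (idm b)) (lu I) ∘ asci a b (tn I I)).
    { rewrite asci_asc, cl. reflexivity. }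
    rw (asc_nat (idm a) (idm b) (lu I)). rw (asc_asci a b (tn I I)). rewrite cr. reflexivity. }
  rewrite P. rw N.
  rwr (tm_compr (asc b I I) (tm (idm b) (lu I)) (a':=a)). rewrite triangle'.
  rwr (asc_nat (idm a) (ru b) (idm I)). rw (asci_asc a b I). rewrite cl.
  rewrite <- tm_compl. reflexivity.
Qed.

Lemma K2' (a b : V) : asc a b I ∘ rui (tn a b) = tm (idm a) (rui b).
Proof.
  apply (iso_cancel_l _ _ (tm (idm a) (ru b)) (tm (idm a) (rui b))).
  { rewrite <- tm_compr, rui_ru, tm_id. reflexivity. }
  rwr (K2 a b). rewrite ru_rui. rewrite <- tm_compr, ru_rui, tm_id. reflexivity.
Qed.

Lemma K3 : lu I = ru I.
Proof.
  assert (E : lu (tn I I) = tm (idm I) (lu I)).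
  { apply (iso_cancel_l _ _ (lu I) (lui I) (lui_lu _)).
    rewrite lu_nat. reflexivity. }
  apply tmIr_inj. rewrite <- K1, <- triangle', E. reflexivity.
Qed.

Lemma K3' : rui I = lui I.
Proof.
  rewrite <- (cr (rui I)). rewrite <- (lu_lui I). rewrite K3. rewrite cA, rui_ru. apply cl.
Qed.
End Coh.

Section Elt.
Context {V : SMCC} (B : VCat V).
Local Notation Ob := (vob V B).
Local Notation H := (vhom V B).
Local Notation I := (I_ V).
Local Notation LB := (vlaws V B).

Definition dot {U W : V} {a b c : Ob} (u : hom U (H b c)) (w : hom W (H a b)) : hom (tn U W) (H a c) :=
  vM V B a b c ∘ tm u w.

Lemma dot_natl {U U' W : V} {a b c : Ob} (u : hom U (H b c)) (s : hom U' U) (w : hom W (H a b)) :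
  dot (u ∘ s) w = dot u w ∘ tm s (idm W).
Proof. unfold dot. rewrite <- cA, <- tm_comp, cr. reflexivity. Qed.
Lemma dot_natr {U W W' : V} {a b c : Ob} (u : hom U (H b c)) (w : hom W (H a b)) (t : hom W' W) :
  dot u (w ∘ t) = dot u w ∘ tm (idm U) t.
Proof. unfold dot. rewrite <- cA, <- tm_comp, cr. reflexivity. Qed.

Lemma dot_assoc {U U' W : V} {a b c d : Ob} (u : hom U (H c d)) (v : hom U' (H b c)) (w : hom W (H a b)) :
  dot (dot u v) w = dot u (dot v w) ∘ asc U U' W.
Proof.
  unfold dot. rewrite <- (cl w) at 1. rewrite tm_comp.
  rwr (vassoc V B LB a b c d). rw (asc_nat u v w).
  rewrite <- (cl u) at 2. rwr (tm_comp u (idm (H c d)) (tm v w) (vM V B a b c)). reflexivity.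
Qed.
Lemma dot_assoc' {U U' W : V} {a b c d : Ob} (u : hom U (H c d)) (v : hom U' (H b c)) (w : hom W (H a b)) :
  dot u (dot v w) = dot (dot u v) w ∘ asci U U' W.
Proof. rewrite dot_assoc. rewrite <- cA, asc_asci, cr. reflexivity. Qed.

Lemma dot_jl {W : V} {a b : Ob} (w : hom W (H a b)) : dot (vj V B b) w = w ∘ lu W.
Proof.
  unfold dot. rewrite tm_split. rewrite cA, (vunitl V B LB). apply lu_nat.
Qed.
Lemma dot_jr {U : V} {a b : Ob} (u : hom U (H a b)) : dot u (vj V B a) = u ∘ ru U.
Proof.
  unfold dot. rewrite tm_split'. rewrite cA, (vunitr V B LB). apply ru_nat.
Qed.

Lemma repR_dot (a : Ob) {b c : Ob} (g : mor B b c) {Z : V} (x : hom Z (H a b)) :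
  repR B a g ∘ x = dot g x ∘ lui Z.
Proof.
  unfold repR, dot. rw (lui_nat x). rwr (tm_split g x). reflexivity.
Qed.
Lemma repL_dot {a b : Ob} (f : mor B a b) (c : Ob) {Z : V} (y : hom Z (H b c)) :
  repL B f c ∘ y = dot y f ∘ rui Z.
Proof.
  unfold repL, dot. rw (rui_nat y). rwr (tm_split' y f). reflexivity.
Qed.

Lemma compB_post {a b c : Ob} (g : mor B b c) (f : mor B a b) : compB B g f = repR B a g ∘ f.
Proof. rewrite repR_dot. reflexivity. Qed.
Lemma compB_pre {a b c : Ob} (g : mor B b c) (f : mor B a b) : compB B g f = repL B f c ∘ g.
Proof. rewrite repL_dot. rewrite K3'. reflexivity. Qed.

Lemma post_comp (a : Ob) {b c d : Ob} (g : mor B c d) (f : mor B b c) {Z : V} (x : hom Z (H a b)) :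
  repR B a (compB B g f) ∘ x = repR B a g ∘ (repR B a f ∘ x).
Proof.
  rewrite !repR_dot. unfold compB at 1. fold (dot g f).
  rewrite dot_natl, dot_assoc. rewrite dot_natr.
  rw (K1' I Z). rw (lui_nat (lui Z)). reflexivity.
Qed.
Lemma pre_comp {a b d : Ob} (g : mor B b d) (f : mor B a b) (c : Ob) {Z : V} (y : hom Z (H d c)) :
  repL B (compB B g f) c ∘ y = repL B f c ∘ (repL B g c ∘ y).
Proof.
  rewrite !repL_dot. unfold compB at 1. fold (dot g f).
  rewrite dot_natr, dot_natl, dot_assoc.
  rwr (rui_nat (rui Z)). rw (K2' Z I). rewrite K3'. reflexivity.
Qed.
Lemma post_pre {a' a b c : Ob} (f : mor B a' a) (g : mor B b c) {Z : V} (y : hom Z (H a b)) :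
  repR B a' g ∘ (repL B f b ∘ y) = repL B f c ∘ (repR B a g ∘ y).
Proof.
  rewrite !repR_dot, !repL_dot. rewrite dot_natr, dot_natl, dot_assoc.
  rwr (rui_nat (lui Z)). rw (K2' I Z). reflexivity.
Qed.
Lemma post_id (a b : Ob) {Z : V} (x : hom Z (H a b)) : repR B a (idB B b) ∘ x = x.
Proof. rewrite repR_dot. unfold idB. rewrite dot_jl. rewrite <- cA, lu_lui. apply cr. Qed.
Lemma pre_id (a b : Ob) {Z : V} (x : hom Z (H a b)) : repL B (idB B a) b ∘ x = x.
Proof. rewrite repL_dot. unfold idB. rewrite dot_jr. rewrite <- cA, ru_rui. apply cr. Qed.

Lemma compB_assoc {a b c d : Ob} (h : mor B c d) (g : mor B b c) (f : mor B a b) :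
  compB B h (compB B g f) = compB B (compB B h g) f.
Proof. rewrite (compB_post (compB B h g) f), post_comp, <- !compB_post. reflexivity. Qed.
Lemma compB_idl {a b : Ob} (f : mor B a b) : compB B (idB B b) f = f.
Proof. rewrite compB_post. apply post_id. Qed.
Lemma compB_idr {a b : Ob} (f : mor B a b) : compB B f (idB B a) = f.
Proof. rewrite compB_pre. apply pre_id. Qed.

Definition orthE {a1 a2 b1 b2 : Ob} (e : mor B a1 a2) (m : mor B b1 b2) : Prop :=
  forall (Z : V) (y : hom Z (H a2 b2)) (x : hom Z (H a1 b1)),
    repL B e b2 ∘ y = repR B a1 m ∘ x ->
    exists! w : hom Z (H a2 b1), repR B a2 m ∘ w = y /\ repL B e b1 ∘ w = x.

Lemma orthV_iff {a1 a2 b1 b2 : Ob} (e : mor B a1 a2) (m : mor B b1 b2) :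
  orthV B e m <-> orthE e m.
Proof.
  split.
  - intros [_ HU] Z y x Hyx. apply HU. exact Hyx.
  - intro HE. split.
    + pose proof (post_pre e m (idm _)) as P. rewrite !cr in P. symmetry. exact P.
    + intros q q1 q2 Hq. apply HE. exact Hq.
Qed.

Lemma curry_nat {a a' b c : V} (g : hom (tn a b) c) (h : hom a' a) :
  curryV g ∘ h = curryV (g ∘ tm h (idm b)).
Proof.
  apply (curry_uniq _ _ (slaws V)). change (ev (sdata V) b c ∘ tm (curryV g ∘ h) (idm b) = g ∘ tm h (idm b)). rewrite tm_compl. rewrite cA.
  unfold curryV, tm, ih, tn. rewrite (curry_ev _ _ (slaws V)). reflexivity.
Qed.
Lemma curry_inj {a b c : V} (g g' : hom (tn a b) c) : curryV g = curryV g' -> g = g'.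
Proof.
  intro E. rewrite <- (curry_ev _ _ (slaws V) a b c g), <- (curry_ev _ _ (slaws V) a b c g').
  fold (@curryV V a b c g). fold (@curryV V a b c g'). rewrite E. reflexivity.
Qed.

Lemma cot_UP (X : V) (b c : Ob) (eps : hom X (H c b)) :
  is_cotensor B X b c eps ->
  forall (a : Ob) (Z : V) (k : hom (tn X Z) (H a b)), exists! z : hom Z (H a c), dot eps z = k.
Proof.
  intros Hc a Z k. destruct (Hc a) as [Psi [HPF HFP]].
  set (Phi := curryV (vM V B a c b ∘ br (H a c) (H c b) ∘ tm (idm (H a c)) eps)) in *.
  assert (KEY : forall z : hom Z (H a c), Phi ∘ z = curryV (dot eps z ∘ br Z X)).
  { intro z. unfold Phi. rewrite curry_nat. f_equal. unfold dot.
    rewrite <- cA. rewrite <- tm_comp, cl, cr. rewrite <- cA, br_nat. rewrite cA. reflexivity. }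
  assert (BC : forall (g g' : hom (tn X Z) (H a b)), g ∘ br Z X = g' ∘ br Z X -> g = g').
  { intros g g' E. apply (iso_cancel_r _ _ (br Z X) (br X Z) (br_br X Z)). exact E. }
  exists (Psi ∘ curryV (k ∘ br Z X)). split.
  - apply BC. apply curry_inj. rewrite <- KEY. rewrite cA. fold Phi. rewrite HFP. apply cl.
  - intros z' Hz'. rewrite <- Hz'. rewrite <- KEY. rewrite cA, HPF. apply cl.
Qed.

Lemma cot_pre (X : V) {a' a b c : Ob} (eps : hom X (H c b)) (f : mor B a' a) {Z : V} (z : hom Z (H a c)) :
  dot eps (repL B f c ∘ z) = repL B f b ∘ dot eps z.
Proof.
  rewrite !repL_dot. rewrite dot_natr. rewrite dot_assoc. rw (K2' X Z). reflexivity.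
Qed.

Lemma cot_mor (X : V) (C D cC cD : Ob) (epsC : hom X (H cC C)) (epsD : hom X (H cD D)) :
  is_cotensor B X D cD epsD -> forall n : mor B C D,
  exists nX : mor B cC cD, forall (a : Ob) (Z : V) (z : hom Z (H a cC)),
    dot epsD (repR B a nX ∘ z) = repR B a n ∘ dot epsC z.
Proof.
  intros HD n. destruct (cot_UP X D cD epsD HD cC I (repR B cC n ∘ epsC ∘ ru X)) as [nX [HnX _]].
  exists nX. intros a Z z.
  rewrite (repR_dot a nX). rewrite dot_natr. rewrite dot_assoc'. rewrite HnX.
  rewrite dot_natl. rewrite <- (triangle' X Z). rw (asc_asci X I Z). rewrite cr.
  rwr (tm_compr (lui Z) (lu Z) (a':=X)). rewrite lu_lui, tm_id, cr.
  rewrite (repR_dot cC n epsC). rewrite dot_natl. rewrite dot_assoc. rw (K1' X Z).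
  rewrite repR_dot. reflexivity.
Qed.
End Elt.

Section Clos.
Context {V : SMCC} (B : VCat V).
Local Notation Ob := (vob V B).
Local Notation H := (vhom V B).
Local Notation I := (I_ V).
Local Notation mor := (mor B).
Local Notation compB := (compB B).
Local Notation repR := (repR B).
Local Notation repL := (repL B).

Lemma down_E (S : MorClass B) {b1 b2 : Ob} (m : mor b1 b2) :
  downV B S b1 b2 m <-> forall a1 a2 (e : mor a1 a2), S a1 a2 e -> orthE B e m.
Proof.
  split; intros h a1 a2 e He; apply orthV_iff; apply h; exact He.
Qed.

Lemma pp {a' a b c : Ob} (f : mor a' a) (g : mor b c) {Z : V} (y : hom Z (H a b)) :
  repL f c ∘ (repR a g ∘ y) = repR a' g ∘ (repL f b ∘ y).
Proof. symmetry. apply post_pre. Qed.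

Lemma down_comp (S : MorClass B) {A0 B0 C0 : Ob} (m1 : mor A0 B0) (m2 : mor B0 C0) :
  downV B S _ _ m1 -> downV B S _ _ m2 -> downV B S _ _ (compB m2 m1).
Proof.
  rewrite !down_E. intros h1 h2 a1 a2 e He Z y x Hyx.
  rewrite post_comp in Hyx.
  destruct (h2 a1 a2 e He Z y _ Hyx) as [w2 [[Ha2 Hb2] U2]].
  destruct (h1 a1 a2 e He Z w2 x Hb2) as [w1 [[Ha1 Hb1] U1]].
  exists w1. split.
  - split; [rewrite post_comp, Ha1; exact Ha2 | exact Hb1].
  - intros w' [Ha' Hb']. rewrite post_comp in Ha'.
    assert (E2 : repR a2 m1 ∘ w' = w2).
    { symmetry. apply U2. split; [exact Ha' | rewrite pp, Hb'; reflexivity]. }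
    apply U1. split; [exact E2 | exact Hb'].
Qed.

Lemma mono_comp {A0 B0 C0 : Ob} (m1 : mor A0 B0) (m2 : mor B0 C0) :
  VMono B m1 -> VMono B m2 -> VMono B (compB m2 m1).
Proof.
  intros h1 h2 a Z g h E. rewrite !post_comp in E. apply (h1 a), (h2 a), E.
Qed.

Definition isoB {b1 b2 : Ob} (i : mor b1 b2) : Prop :=
  exists j : mor b2 b1, compB j i = idB B b1 /\ compB i j = idB B b2.

Lemma down_iso (S : MorClass B) {b1 b2 : Ob} (i : mor b1 b2) : isoB i -> downV B S _ _ i.
Proof.
  intros [j [Hji Hij]]. rewrite down_E. intros a1 a2 e _ Z y x Hyx.
  exists (repR a2 j ∘ y). split.
  - split.
    + rewrite <- post_comp, Hij. apply post_id.
    + rewrite pp, Hyx, <- post_comp, Hji. apply post_id.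
  - intros w' [Ha _]. rewrite <- Ha, <- post_comp, Hji. apply post_id.
Qed.

Lemma mono_iso {b1 b2 : Ob} (i : mor b1 b2) : isoB i -> VMono B i.
Proof.
  intros [j [Hji Hij]] a Z g h E.
  rewrite <- (post_id B a b1 g), <- (post_id B a b1 h), <- Hji, !post_comp, E. reflexivity.
Qed.

Definition is_pb {C0 D0 B0 P : Ob} (n : mor C0 D0) (u : mor B0 D0) (n' : mor P B0) (u' : mor P C0) : Prop :=
  compB n u' = compB u n' /\
  forall (a : Ob) (Z : V) (x : hom Z (H a B0)) (y : hom Z (H a C0)),
    repR a u ∘ x = repR a n ∘ y ->
    exists! w : hom Z (H a P), repR a n' ∘ w = x /\ repR a u' ∘ w = y.

Lemma mono_pb {C0 D0 B0 P : Ob} (n : mor C0 D0) (u : mor B0 D0) (n' : mor P B0) (u' : mor P C0) :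
  is_pb n u n' u' -> VMono B n -> VMono B n'.
Proof.
  intros [Hc HU] Hn a Z w1 w2 E.
  assert (E2 : repR a u' ∘ w1 = repR a u' ∘ w2).
  { apply (Hn a). rewrite <- !post_comp, Hc, !post_comp, E. reflexivity. }
  assert (C1 : repR a u ∘ (repR a n' ∘ w1) = repR a n ∘ (repR a u' ∘ w1)).
  { rewrite <- !post_comp, Hc. reflexivity. }
  destruct (HU a Z _ _ C1) as [w [_ Uw]].
  transitivity w; [symmetry|]; apply Uw; split; auto.
Qed.

Lemma down_pb (S : MorClass B) {C0 D0 B0 P : Ob} (n : mor C0 D0) (u : mor B0 D0) (n' : mor P B0) (u' : mor P C0) :
  is_pb n u n' u' -> downV B S _ _ n -> downV B S _ _ n'.
Proof.
  intros [Hc HU]. rewrite !down_E. intros hn a1 a2 e He Z y x Hyx.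
  assert (C1 : repL e D0 ∘ (repR a2 u ∘ y) = repR a1 n ∘ (repR a1 u' ∘ x)).
  { rewrite pp, Hyx, <- !post_comp, Hc. reflexivity. }
  destruct (hn a1 a2 e He Z _ _ C1) as [w1 [[Ha1 Hb1] U1]].
  assert (C2 : repR a2 u ∘ y = repR a2 n ∘ w1) by (symmetry; exact Ha1).
  destruct (HU a2 Z y w1 C2) as [w [[Hwa Hwb] Uw]].
  exists w. split.
  - split; [exact Hwa|].
    assert (C3 : repR a1 u ∘ (repL e B0 ∘ y) = repR a1 n ∘ (repR a1 u' ∘ x)).
    { rewrite Hyx, <- !post_comp, Hc. reflexivity. }
    destruct (HU a1 Z _ _ C3) as [w3 [_ U3]].
    transitivity w3; [symmetry|]; apply U3; split.
    + rewrite post_pre, Hwa. reflexivity.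
    + rewrite post_pre, Hwb. exact Hb1.
    + symmetry. exact Hyx.
    + reflexivity.
  - intros w' [Ha' Hb']. apply Uw. split; [exact Ha'|].
    symmetry. apply U1. split.
    + rewrite <- post_comp, Hc, post_comp, Ha'. reflexivity.
    + rewrite pp, Hb'. reflexivity.
Qed.

Lemma mono_fib (b : Ob) (J : Type) (A : J -> Ob) (m : forall i, mor (A i) b) (P : Ob) (q : mor P b)
  (p : forall i, mor P (A i)) :
  is_Vfibre_product B b J A m P q p -> (forall i, VMono B (m i)) -> VMono B q.
Proof.
  intros [Hc HU] Hm a Z w1 w2 E.
  assert (Ei : forall i, repR a (p i) ∘ w1 = repR a (p i) ∘ w2).
  { intro i. apply (Hm i a). rewrite <- !post_comp, Hc. exact E. }
  destruct (HU a Z (repR a q ∘ w1) (fun i => repR a (p i) ∘ w1)) as [w [_ Uw]].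
  { intro i. rewrite <- post_comp, Hc. reflexivity. }
  transitivity w; [symmetry|]; apply Uw; split; auto.
Qed.

Lemma down_fib (S : MorClass B) (b : Ob) (J : Type) (A : J -> Ob) (m : forall i, mor (A i) b) (P : Ob) (q : mor P b)
  (p : forall i, mor P (A i)) :
  is_Vfibre_product B b J A m P q p -> (forall i, downV B S _ _ (m i)) -> downV B S _ _ q.
Proof.
  intros [Hc HU] Hm. rewrite down_E. intros a1 a2 e He Z y x Hyx.
  assert (Ci : forall i, repL e b ∘ y = repR a1 (m i) ∘ (repR a1 (p i) ∘ x)).
  { intro i. rewrite <- post_comp, Hc. exact Hyx. }
  assert (Hi : forall i, exists! wi, repR a2 (m i) ∘ wi = y /\ repL e (A i) ∘ wi = repR a1 (p i) ∘ x).
  { intro i. pose proof (Hm i) as hm. rewrite down_E in hm. exact (hm a1 a2 e He Z _ _ (Ci i)). }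
  pose (wf := fun i => proj1_sig (ClassicalEpsilon.constructive_indefinite_description _ (Hi i))).
  assert (Hwf : forall i, (repR a2 (m i) ∘ wf i = y /\ repL e (A i) ∘ wf i = repR a1 (p i) ∘ x) /\
     forall w', repR a2 (m i) ∘ w' = y /\ repL e (A i) ∘ w' = repR a1 (p i) ∘ x -> wf i = w').
  { intro i. unfold wf. destruct (ClassicalEpsilon.constructive_indefinite_description _ (Hi i)) as [wi Hwi]. exact Hwi. }
  destruct (HU a2 Z y wf) as [w [[Hwa Hwb] Uw]].
  { intro i. apply (Hwf i). }
  exists w. split.
  - split; [exact Hwa|].
    destruct (HU a1 Z (repR a1 q ∘ x) (fun i => repR a1 (p i) ∘ x)) as [w3 [_ U3]].
    { intro i. rewrite <- post_comp, Hc. reflexivity. }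
    transitivity w3; [symmetry|]; apply U3; split.
    + rewrite post_pre, Hwa. exact Hyx.
    + intro i. rewrite post_pre, Hwb. apply (Hwf i).
    + reflexivity.
    + intro i. reflexivity.
  - intros w' [Ha' Hb']. apply Uw. split; [exact Ha'|].
    intro i. symmetry. apply (Hwf i). split.
    + rewrite <- post_comp, Hc. exact Ha'.
    + rewrite pp, Hb'. reflexivity.
Qed.

Lemma cot_inj (X : V) (b c : Ob) (eps : hom X (H c b)) :
  is_cotensor B X b c eps -> forall (a : Ob) (Z : V) (z1 z2 : hom Z (H a c)),
  dot B eps z1 = dot B eps z2 -> z1 = z2.
Proof.
  intros Hc a Z z1 z2 E. destruct (cot_UP B X b c eps Hc a Z (dot B eps z1)) as [z [_ U]].
  transitivity z; [symmetry|]; apply U; auto.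
Qed.

Section Cot.
Variables (X : V) (C0 D0 cC cD : Ob) (epsC : hom X (H cC C0)) (epsD : hom X (H cD D0)).
Hypotheses (HC : is_cotensor B X C0 cC epsC) (HD : is_cotensor B X D0 cD epsD).
Variables (n : mor C0 D0) (nX : mor cC cD).
Hypothesis HnX : forall (a : Ob) (Z : V) (z : hom Z (H a cC)),
    dot B epsD (repR a nX ∘ z) = repR a n ∘ dot B epsC z.

Lemma mono_cot : VMono B n -> VMono B nX.
Proof.
  intros Hn a Z g h E. apply (cot_inj X C0 cC epsC HC a Z). apply (Hn a).
  rewrite <- !HnX, E. reflexivity.
Qed.

Lemma down_cot (S : MorClass B) : downV B S _ _ n -> downV B S _ _ nX.
Proof.
  rewrite !down_E. intros hn a1 a2 e He Z y x Hyx.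
  assert (C1 : repL e D0 ∘ dot B epsD y = repR a1 n ∘ dot B epsC x).
  { rewrite <- cot_pre, Hyx. apply HnX. }
  destruct (hn a1 a2 e He _ _ _ C1) as [w' [[Ha Hb] U]].
  destruct (cot_UP B X C0 cC epsC HC a2 Z w') as [w [Hw _]].
  exists w. split.
  - split.
    + apply (cot_inj X D0 cD epsD HD a2 Z). rewrite HnX, Hw. exact Ha.
    + apply (cot_inj X C0 cC epsC HC a1 Z). rewrite cot_pre, Hw. exact Hb.
  - intros w1 [Ha1 Hb1]. apply (cot_inj X C0 cC epsC HC a2 Z). rewrite Hw.
    apply U. split.
    + rewrite <- HnX, Ha1. reflexivity.
    + rewrite <- cot_pre, Hb1. reflexivity.
Qed.
End Cot.
End Clos.
Import ListNotations.

Inductive O3 : Type := o0 | o1 | o2.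
Definition al3 (i j : O3) : bool :=
  match i, j with o0,o0 | o1,o1 | o2,o2 | o0,o2 | o1,o2 => true | _,_ => false end.
Definition H3 (i j : O3) : Type := if al3 i j then unit else Empty_set.
Definition id3 (i : O3) : H3 i i := match i with o0 => tt | o1 => tt | o2 => tt end.
Definition c3 (i j k : O3) (g : H3 j k) (f : H3 i j) : H3 i k.
Proof. destruct i, j, k; simpl in *; first [exact tt | (destruct f; fail) | (destruct g; fail)]. Defined.
Definition J3 : Category.
Proof.
  refine {| ob := O3; hom := H3; idm := id3; comp := c3 |}.
  - intros a b f. destruct a, b; simpl in f; destruct f; reflexivity.
  - intros a b f. destruct a, b; simpl in f; destruct f; reflexivity.
  - intros a b c d h g f. destruct a, b, c, d; simpl in f, g, h;
      try destruct f; try destruct g; try destruct h; reflexivity.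
Defined.
Lemma fin3 : finite_cat J3.
Proof.
  split.
  - exists [o0; o1; o2]. intros []; simpl; auto.
  - intros i j. destruct i, j; simpl;
      first [ exists [tt]; intros []; left; reflexivity | exists (@nil Empty_set); intros [] ].
Qed.

Inductive O2 : Type := q0 | q1.
Definition H2 (i j : O2) : Type :=
  match i, j with q0,q0 => unit | q1,q1 => unit | q0,q1 => bool | q1,q0 => Empty_set end.
Definition id2 (i : O2) : H2 i i := match i with q0 => tt | q1 => tt end.
Definition c2 (i j k : O2) (g : H2 j k) (f : H2 i j) : H2 i k.
Proof. destruct i, j, k; simpl in *; first [exact tt | exact f | exact g | (destruct f; fail) | (destruct g; fail)]. Defined.
Definition J2 : Category.
Proof.
  refine {| ob := O2; hom := H2; idm := id2; comp := c2 |}.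
  - intros a b f. destruct a, b; simpl in f; destruct f; reflexivity.
  - intros a b f. destruct a, b; simpl in f; destruct f; reflexivity.
  - intros a b c d h g f. destruct a, b, c, d; simpl in f, g, h;
      try destruct f; try destruct g; try destruct h; reflexivity.
Defined.
Lemma fin2 : finite_cat J2.
Proof.
  split.
  - exists [q0; q1]. intros []; simpl; auto.
  - intros i j. destruct i, j; simpl.
    + exists [tt]; intros []; left; reflexivity.
    + exists [true; false]; intros []; simpl; auto.
    + exists (@nil Empty_set); intros [].
    + exists [tt]; intros []; left; reflexivity.
Qed.

Section Lim.
Context {V : SMCC} (B : VCat V).
Local Notation Ob := (vob V B).
Local Notation H := (vhom V B).
Local Notation mor := (mor B).
Local Notation compB := (compB B).
Local Notation repR := (repR B).

Lemma pb_exists (Hfl : has_finite_Vlimits B) {C0 D0 B0 : Ob} (n : mor C0 D0) (u : mor B0 D0) :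
  exists P (n' : mor P B0) (u' : mor P C0), is_pb B n u n' u'.
Proof.
  pose (D3 := fun x : J3 => match x with o0 => B0 | o1 => C0 | o2 => D0 end).
  pose (Dm3 := fun (i j : J3) => match i, j return H3 i j -> mor (D3 i) (D3 j) with
     | o0,o0 => fun _ => idB B _ | o1,o1 => fun _ => idB B _ | o2,o2 => fun _ => idB B _
     | o0,o2 => fun _ => u | o1,o2 => fun _ => n
     | o0,o1 => fun f => match f with end | o1,o0 => fun f => match f with end
     | o2,o0 => fun f => match f with end | o2,o1 => fun f => match f with end end).
  assert (Hid : forall i, Dm3 i i (idm i) = idB B (D3 i)) by (intros []; reflexivity).
  assert (Hc : forall i j k (g : hom j k) (f : hom i j), Dm3 i k (g ∘ f) = compB (Dm3 j k g) (Dm3 i j f)).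
  { intros i j k g f. destruct i, j, k; simpl in f, g; try destruct f; try destruct g; simpl;
      try rewrite compB_idl; try rewrite compB_idr; reflexivity. }
  destruct (Hfl J3 fin3 D3 Dm3 Hid Hc) as [L [pi [Hcone HU]]].
  exists L, (pi o0), (pi o1). split.
  - pose proof (Hcone o1 o2 tt) as E1. pose proof (Hcone o0 o2 tt) as E2.
    simpl in E1, E2. rewrite E1, E2. reflexivity.
  - intros a Z x y Hxy.
    pose (xs := fun j : J3 => match j return hom Z (H a (D3 j)) with o0 => x | o1 => y | o2 => repR a u ∘ x end).
    assert (cone : forall i j (f : hom i j), repR a (Dm3 i j f) ∘ xs i = xs j).
    { intros i j f. destruct i, j; simpl in f; destruct f; simpl;
        try apply post_id; try reflexivity. symmetry. exact Hxy. }
    destruct (HU a Z xs cone) as [w [Hw Uw]].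
    exists w. split.
    + split; [apply (Hw o0) | apply (Hw o1)].
    + intros w' [Ha Hb]. apply Uw. intros []; simpl; auto.
      rewrite <- (Hcone o0 o2 tt). simpl. rewrite post_comp, Ha. reflexivity.
Qed.

Lemma eq_exists (Hfl : has_finite_Vlimits B) {B0 Q : Ob} (i1 i2 : mor B0 Q) :
  exists E (m : mor E B0), compB i1 m = compB i2 m /\
    forall (a : Ob) (Z : V) (x : hom Z (H a B0)), repR a i1 ∘ x = repR a i2 ∘ x ->
      exists! w : hom Z (H a E), repR a m ∘ w = x.
Proof.
  pose (D2 := fun x : J2 => match x with q0 => B0 | q1 => Q end).
  pose (Dm2 := fun (i j : J2) => match i, j return H2 i j -> mor (D2 i) (D2 j) with
     | q0,q0 => fun _ => idB B _ | q1,q1 => fun _ => idB B _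
     | q0,q1 => fun f => if f then i1 else i2
     | q1,q0 => fun f => match f with end end).
  assert (Hid : forall i, Dm2 i i (idm i) = idB B (D2 i)) by (intros []; reflexivity).
  assert (Hc : forall i j k (g : hom j k) (f : hom i j), Dm2 i k (g ∘ f) = compB (Dm2 j k g) (Dm2 i j f)).
  { intros i j k g f. destruct i, j, k; simpl in f, g; try destruct f; try destruct g; simpl;
      try rewrite compB_idl; try rewrite compB_idr; reflexivity. }
  destruct (Hfl J2 fin2 D2 Dm2 Hid Hc) as [L [pi [Hcone HU]]].
  exists L, (pi q0). split.
  - pose proof (Hcone q0 q1 true) as E1. pose proof (Hcone q0 q1 false) as E2.
    simpl in E1, E2. rewrite E1, E2. reflexivity.
  - intros a Z x Hx.
    pose (xs := fun j : J2 => match j return hom Z (H a (D2 j)) with q0 => x | q1 => repR a i1 ∘ x end).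
    assert (cone : forall i j (f : hom i j), repR a (Dm2 i j f) ∘ xs i = xs j).
    { intros i j f. destruct i, j; simpl in f; destruct f; simpl;
        try apply post_id; try reflexivity. symmetry. exact Hx. }
    destruct (HU a Z xs cone) as [w [Hw Uw]].
    exists w. split.
    + apply (Hw q0).
    + intros w' Ha. apply Uw. intros []; simpl; auto.
      rewrite <- (Hcone q0 q1 true). simpl. rewrite post_comp, Ha. reflexivity.
Qed.
End Lim.

Section Main.
Context {V : SMCC} (B : VCat V).
Local Notation Ob := (vob V B).
Local Notation H := (vhom V B).
Local Notation I := (I_ V).
Local Notation mor := (mor B).
Local Notation compB := (compB B).
Local Notation repR := (repR B).
Local Notation repL := (repL B).
Variables (Hwc : fin_well_complete B) (Hcot : cotensored B).

Section Sg.
Variable Sg : MorClass B.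
Let N := capC B (downV B Sg) (StrMonoV B).

Lemma N_mono {b1 b2 : Ob} (m : mor b1 b2) : N _ _ m -> VMono B m.
Proof. intros [_ [h _]]. exact h. Qed.
Lemma N_intro {b1 b2 : Ob} (m : mor b1 b2) :
  downV B Sg _ _ m -> VMono B m -> downV B (EpiV B) _ _ m -> N _ _ m.
Proof. intros h1 h2 h3. split; [exact h1 | split; [exact h2 | exact h3]]. Qed.
Lemma N_down {b1 b2 : Ob} (m : mor b1 b2) : N _ _ m -> downV B Sg _ _ m /\ downV B (EpiV B) _ _ m.
Proof. intros [h1 [_ h3]]. split; [exact h1 | exact h3]. Qed.

Lemma N_comp {A0 B0 C0 : Ob} (m1 : mor A0 B0) (m2 : mor B0 C0) : N _ _ m1 -> N _ _ m2 -> N _ _ (compB m2 m1).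
Proof.
  intros h1 h2. destruct (N_down _ h1) as [a1 b1]. destruct (N_down _ h2) as [a2 b2].
  apply N_intro; [apply down_comp; auto | apply mono_comp; apply N_mono; auto | apply down_comp; auto].
Qed.
Lemma N_iso {b1 b2 : Ob} (i : mor b1 b2) : isoB B i -> N _ _ i.
Proof. intro h. apply N_intro; [apply down_iso | apply mono_iso | apply down_iso]; exact h. Qed.

Lemma factor {A0 B0 : Ob} (f : mor A0 B0) :
  exists P (e : mor A0 P) (q : mor P B0), upV B N _ _ e /\ N _ _ q /\ f = compB q e.
Proof.
  destruct Hwc as [Hfl Hfib].
  pose (Ix := {C : Ob & {n : mor C B0 & {v : mor A0 C | N _ _ n /\ compB n v = f}}}).
  pose (Ai := fun i : Ix => projT1 i).
  pose (mi := fun i : Ix => projT1 (projT2 i) : mor (Ai i) B0).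
  pose (vi := fun i : Ix => proj1_sig (projT2 (projT2 i)) : mor A0 (Ai i)).
  assert (HmiN : forall i, N _ _ (mi i)) by (intro i; exact (proj1 (proj2_sig (projT2 (projT2 i))))).
  assert (Hmiv : forall i, compB (mi i) (vi i) = f) by (intro i; exact (proj2 (proj2_sig (projT2 (projT2 i))))).
  destruct (Hfib B0 Ix Ai mi (fun i => proj2 (HmiN i))) as [P [q [p Hfp]]].
  assert (HqN : N _ _ q).
  { apply N_intro.
    - apply (down_fib B Sg B0 Ix Ai mi P q p Hfp). intro i. apply (N_down _ (HmiN i)).
    - apply (mono_fib B B0 Ix Ai mi P q p Hfp). intro i. apply N_mono, HmiN.
    - apply (down_fib B (EpiV B) B0 Ix Ai mi P q p Hfp). intro i. apply (N_down _ (HmiN i)). }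
  destruct Hfp as [Hc HU].
  destruct (HU A0 I f vi) as [e [[He1 He2] _]].
  { intro i. rewrite <- compB_post. apply Hmiv. }
  exists P, e, q. split; [|split; [exact HqN | rewrite compB_post; symmetry; exact He1]].
  assert (OO : forall C' D' (n' : mor C' D'), N _ _ n' -> forall (y' : mor P D') (x' : mor A0 C'),
     compB y' e = compB n' x' -> exists d : mor P C', compB n' d = y' /\ compB d e = x').
  { intros C' D' n' Hn' y' x' Hyx.
    destruct (pb_exists B Hfl n' y') as [Q [n'' [g Hpb]]].
    assert (Hn'' : N _ _ n'').
    { destruct (N_down _ Hn') as [d1 d2]. apply N_intro.
      - exact (down_pb B Sg n' y' n'' g Hpb d1).
      - exact (mono_pb B n' y' n'' g Hpb (N_mono _ Hn')).
      - exact (down_pb B (EpiV B) n' y' n'' g Hpb d2). }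
    destruct Hpb as [Hpc HpU].
    destruct (HpU A0 I e x') as [k [[Hk1 Hk2] _]].
    { rewrite <- !compB_post. exact Hyx. }
    assert (Hf : compB (compB q n'') k = f).
    { rewrite <- compB_assoc, (compB_post B n'' k), Hk1, compB_post. exact He1. }
    pose (i0 := existT (fun C => {n : mor C B0 & {v : mor A0 C | N _ _ n /\ compB n v = f}})
                  Q (existT _ (compB q n'') (exist _ k (conj (N_comp _ _ Hn'' HqN) Hf))) : Ix).
    assert (Hpi : compB n'' (p i0) = idB B P).
    { apply (N_mono q HqN P I). rewrite <- !compB_post, compB_assoc.
      change (compB (compB q n'') (p i0)) with (compB (mi i0) (p i0)). rewrite (Hc i0). rewrite compB_idr. reflexivity. }
    exists (compB g (p i0)). split.
    - rewrite compB_assoc, Hpc, <- compB_assoc, Hpi, compB_idr. reflexivity.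
    - rewrite <- compB_assoc. transitivity (compB g k).
      + f_equal. rewrite compB_post. exact (He2 i0).
      + rewrite compB_post. exact Hk2. }
  intros C D n HN. apply orthV_iff. intros Z y x Hyx.
  destruct (Hcot Z C) as [cC [epsC HC]]. destruct (Hcot Z D) as [cD [epsD HD]].
  destruct (cot_mor B Z C D cC cD epsC epsD HD n) as [nX HnX].
  assert (HnXN : N _ _ nX).
  { destruct (N_down _ HN) as [d1 d2]. apply N_intro.
    - exact (down_cot B Z C D cC cD epsC epsD HC HD n nX HnX Sg d1).
    - exact (mono_cot B Z C D cC cD epsC epsD HC n nX HnX (N_mono _ HN)).
    - exact (down_cot B Z C D cC cD epsC epsD HC HD n nX HnX (EpiV B) d2). }
  destruct (cot_UP B Z D cD epsD HD P I (y ∘ ru Z)) as [yh [Hyh _]].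
  destruct (cot_UP B Z C cC epsC HC A0 I (x ∘ ru Z)) as [xh [Hxh _]].
  assert (Sq : compB yh e = compB nX xh).
  { apply (cot_inj B Z D cD epsD HD A0 I). rewrite compB_pre, cot_pre, Hyh.
    rewrite compB_post, HnX, Hxh. rewrite !cA, Hyx. reflexivity. }
  destruct (OO cC cD nX HnXN yh xh Sq) as [d [Hd1 Hd2]].
  assert (W1 : repR P n ∘ (dot B epsC d ∘ rui Z) = y).
  { rewrite cA. rewrite <- HnX. rewrite <- compB_post, Hd1, Hyh. rewrite <- cA, ru_rui, cr. reflexivity. }
  exists (dot B epsC d ∘ rui Z). split.
  - split; [exact W1|].
    rewrite cA, <- cot_pre, <- compB_pre, Hd2, Hxh, <- cA, ru_rui, cr. reflexivity.
  - intros w' [Hw'1 _]. apply (N_mono n HN P Z). rewrite W1, Hw'1. reflexivity.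
Qed.

Lemma fact2 : is_fact_system B (upV B N) N.
Proof.
  split; [|split].
  - intros b1 b2 m. split.
    + intros HN a1 a2 e He. exact (He b1 b2 m HN).
    + intros Hd. destruct (factor m) as [P [e [q [He [Hq Hm]]]]].
      pose proof (Hd _ _ e He) as Ho. rewrite orthV_iff in Ho.
      destruct (Ho I q (idB B b1)) as [d [[Hd1 Hd2] _]].
      { rewrite <- compB_pre, <- compB_post, compB_idr, Hm. reflexivity. }
      rewrite <- compB_post in Hd1. rewrite <- compB_pre in Hd2.
      assert (Hed : compB e d = idB B P).
      { apply (N_mono q Hq P I). rewrite <- !compB_post, compB_assoc, <- Hm, Hd1, compB_idr. reflexivity. }
      rewrite Hm. apply N_comp; [apply N_iso; exists d; split; assumption | exact Hq].
  - intros; reflexivity.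
  - intros a b f. exact (factor f).
Qed.
End Sg.

Lemma upStr_epi (Hck : has_Vcokernel_pairs B) {A0 B0 : Ob} (e : mor A0 B0) :
  (forall b1 b2 (m : mor b1 b2), StrMonoV B b1 b2 m -> orthV B e m) -> VEpi B e.
Proof.
  intro Hort. destruct Hwc as [Hfl _].
  destruct (Hck A0 B0 e) as [Q [i1 [i2 [Hie Hpb]]]].
  destruct (eq_exists B Hfl i1 i2) as [E [m [Hm HU]]].
  assert (Hmm : VMono B m).
  { intros a Z w1 w2 Ew. destruct (HU a Z (repR a m ∘ w1)) as [w [_ Uw]].
    { rewrite <- !post_comp, Hm. reflexivity. }
    transitivity w; [symmetry|]; apply Uw; auto. }
  assert (Hs : StrMonoV B _ _ m).
  { split; [exact Hmm|]. intros a1 a2 e' He'. apply orthV_iff. intros Z y x Hyx.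
    assert (Eq : repR a2 i1 ∘ y = repR a2 i2 ∘ y).
    { apply (He' Q). rewrite <- !post_pre, Hyx, <- !post_comp, Hm. reflexivity. }
    destruct (HU a2 Z y Eq) as [w [Hw Uw]]. exists w. split.
    - split; [exact Hw|]. apply (Hmm a1). rewrite post_pre, Hw. exact Hyx.
    - intros w' [H1 _]. apply Uw; exact H1. }
  destruct (HU A0 I e) as [k [Hk _]].
  { rewrite <- !compB_post. exact Hie. }
  pose proof (Hort _ _ m Hs) as Ho. rewrite orthV_iff in Ho.
  destruct (Ho I (idB B B0) k) as [d [[Hd1 _] _]].
  { rewrite <- compB_pre, compB_idl, Hk. reflexivity. }
  rewrite <- compB_post in Hd1.
  assert (Ei : i1 = i2).
  { rewrite <- (compB_idr B i1), <- (compB_idr B i2), <- Hd1, !compB_assoc, Hm. reflexivity. }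
  intros c Z g h Egh. destruct (Hpb c) as [_ HP]. destruct (HP Z g h Egh) as [u [[Hu1 Hu2] _]].
  rewrite <- Hu1, <- Hu2, Ei. reflexivity.
Qed.

Lemma fact_ext (E M E' M' : MorClass B) : is_fact_system B E M ->
  (forall a b f, E a b f <-> E' a b f) -> (forall a b f, M a b f <-> M' a b f) -> is_fact_system B E' M'.
Proof.
  intros [h1 [h2 h3]] HE HM. split; [|split].
  - intros b1 b2 m. rewrite <- HM, h1. split; intros Hx a1 a2 e He; apply Hx; apply HE; exact He.
  - intros a1 a2 e. rewrite <- HE, h2. split; intros Hx b1 b2 m Hm; apply Hx; apply HM; exact Hm.
  - intros a b f. destruct (h3 a b f) as [c [e [m [He [Hm Hf]]]]]. exists c, e, m.
    rewrite <- HE, <- HM. auto.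
Qed.

Theorem main_thm :
  (has_Vcokernel_pairs B -> is_fact_system B (EpiV B) (StrMonoV B)) /\
  (forall Sigma : MorClass B,
     is_fact_system B
       (upV B (capC B (downV B Sigma) (StrMonoV B)))
       (capC B (downV B Sigma) (StrMonoV B))).
Proof.
  split.
  - intro Hck. pose (Sg0 := (fun _ _ _ => False) : MorClass B).
    apply (fact_ext _ _ _ _ (fact2 Sg0)).
    + intros a b e. split.
      * intro Hu. apply (upStr_epi Hck). intros b1 b2 m Hm. apply Hu. split; [|exact Hm].
        intros a1 a2 e' [].
      * intros He b1 b2 m [_ [_ Hs]]. exact (Hs a b e He).
    + intros a b m. split; [intros [_ Hm]; exact Hm | intro Hm; split; [intros a1 a2 e' [] | exact Hm]].
  - intro Sg. apply fact2.
Qed.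
End Main.

Import ListNotations.
Theorem corollary7p5 (V : SMCC) (B : VCat V)
    (Hwc : fin_well_complete B) (Hcot : cotensored B) :
  (has_Vcokernel_pairs B -> is_fact_system B (EpiV B) (StrMonoV B)) /\
  (forall Sigma : MorClass B,
     is_fact_system B
       (upV B (capC B (downV B Sigma) (StrMonoV B)))
       (capC B (downV B Sigma) (StrMonoV B))).
Proof. exact (main_thm B Hwc Hcot). Qed.
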